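(* Let $I,J$ be disjoint subsets of $\{1,\dots,n\}$ and $I',J'$ disjoint subsets of $\{1,\dots,n\}$, let $a_k\in\mathbb{R}$ for $k\in I\cup J$ and $b_k\in\mathbb{R}$ for $k\in I'\cup J'$, and let $\mathscr H=\{x\in\mathbb{R}_{\max}^n:\bigoplus_{i\in I}a_ix_i\le\bigoplus_{j\in J}a_jx_j\}$, $\mathscr H'=\{x\in\mathbb{R}_{\max}^n:\bigoplus_{i\in I'}b_ix_i\le\bigoplus_{j\in J'}b_jx_j\}$. If $I\neq\emptyset$, then $\mathscr H'\subset\mathscr H$ if and only if $I\subset I'$, $J'\subset J$, and $b_j-b_i\le a_j-a_i$ for all $i\in I$ and $j\in J'$.
   Context: $\mathbb{R}_{\max}=\mathbb{R}\cup\{-\infty\}$ with $a\oplus b=\max(a,b)$ and $ab=a+b$; an empty max-plus sum equals $-\infty$. Thus $\bigoplus_{i\in I}a_ix_i=\max_{i\in I}(a_i+x_i)$. *)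

(* Defs.v *)
From HB Require Import structures.
From mathcomp Require Import all_boot all_order all_algebra.
From mathcomp Require Import reals.
Set Implicit Arguments. Unset Strict Implicit. Unset Printing Implicit Defensive.
Import Order.TTheory GRing.Theory Num.Theory.
Local Open Scope ring_scope.

(* The max-plus semiring R_max = R ∪ {-oo}, modelled as [option R]
   with [None] standing for -oo. *)
Definition rmax (R : realType) := option R.

Definition mp_add (R : realType) (u v : rmax R) : rmax R :=
  match u, v with
  | None, _ => v
  | _, None => u
  | Some a, Some b => Some (Num.max a b)
  end.

Definition mp_le (R : realType) (u v : rmax R) : bool :=
  match u, v with
  | None, _ => true
  | Some _, None => false
  | Some a, Some b => a <= b
  end.

Definition mp_lin (R : realType) (n : nat) (I : {set 'I_n}) (a : 'I_n -> R)
  (x : 'I_n -> rmax R) : rmax R :=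
  \big[@mp_add R/None]_(i in I) omap (fun t => a i + t) (x i).

Definition mp_halfspace (R : realType) (n : nat) (I J : {set 'I_n})
  (a : 'I_n -> R) (x : 'I_n -> rmax R) : Prop :=
  mp_le (mp_lin I a x) (mp_lin J a x).

(* Main.v *)
Require Import Defs.
From HB Require Import structures.
From mathcomp Require Import all_boot all_order all_algebra.
From mathcomp Require Import reals.
From mathcomp Require Import lra.
Import Order.TTheory GRing.Theory Num.Theory.
Local Open Scope ring_scope.

Section Aux.
Variable R : realType.

Lemma mp_le_trans (u v w : rmax R) : mp_le u v -> mp_le v w -> mp_le u w.
Proof. by case: u; case: v; case: w => //= p q r; apply: le_trans. Qed.

Lemma mp_le_refl (u : rmax R) : mp_le u u.
Proof. by case: u => //= p. Qed.

Lemma mp_add_leP (u w v : rmax R) : mp_le (mp_add u w) v = mp_le u v && mp_le w v.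
Proof. by case: u; case: w; case: v => //= *; rewrite ?ge_max ?andbT. Qed.

Lemma mp_add_geP (c : R) (u w : rmax R) :
  mp_le (Some c) (mp_add u w) = mp_le (Some c) u || mp_le (Some c) w.
Proof. by case: u; case: w => //= *; rewrite ?le_max ?orbF. Qed.

Lemma big_leP (T : eqType) (r : seq T) (P : pred T) (F : T -> rmax R) v :
  mp_le (\big[@mp_add R/None]_(i <- r | P i) F i) v <->
  (forall i, i \in r -> P i -> mp_le (F i) v).
Proof.
elim: r => [|x r IH]; first by rewrite big_nil; split.
rewrite big_cons; case Px: (P x).
  rewrite mp_add_leP; split.
    move=> /andP[H1 /IH H2] i; rewrite inE => /orP[/eqP->|] //; by move=> ?; apply: H2.
  move=> H; apply/andP; split; first by apply: H; rewrite ?inE ?eqxx.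
  by apply/IH => i ir; apply: H; rewrite inE ir orbT.
rewrite IH; split.
  move=> H i; rewrite inE => /orP[/eqP->|]; first by rewrite Px.
  by apply: H.
by move=> H i ir; apply: H; rewrite inE ir orbT.
Qed.

Lemma big_geP (T : eqType) (r : seq T) (P : pred T) (F : T -> rmax R) c :
  mp_le (Some c) (\big[@mp_add R/None]_(i <- r | P i) F i) <->
  (exists i, [/\ i \in r, P i & mp_le (Some c) (F i)]).
Proof.
elim: r => [|x r IH]; first by rewrite big_nil; split => // -[i []]; rewrite in_nil.
rewrite big_cons; case Px: (P x).
  rewrite mp_add_geP; split.
    move=> /orP[H|/IH[i [H1 H2 H3]]]; first by exists x; split; rewrite ?inE ?eqxx.
    by exists i; split; rewrite ?inE ?H1 ?orbT.
  move=> [i [H1 H2 H3]]; move: H1; rewrite inE => /orP[/eqP Ei|ir].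
    by rewrite -Ei H3.
  by apply/orP; right; apply/IH; exists i.
rewrite IH; split.
  by move=> [i [H1 H2 H3]]; exists i; split; rewrite ?inE ?H1 ?orbT.
move=> [i [H1 H2 H3]]; move: H1; rewrite inE => /orP[/eqP Ei|ir].
  by rewrite Ei Px in H2.
by exists i.
Qed.

Lemma lin_leP n (I : {set 'I_n}) (a : 'I_n -> R) (x : 'I_n -> rmax R) v :
  mp_le (mp_lin I a x) v <->
  (forall i, i \in I -> mp_le (omap (fun t => a i + t) (x i)) v).
Proof.
rewrite /mp_lin big_leP; split => H i.
  by move=> iI; apply: H; rewrite ?mem_index_enum.
by move=> _; apply: H.
Qed.

Lemma lin_geP n (I : {set 'I_n}) (a : 'I_n -> R) (x : 'I_n -> rmax R) c :
  mp_le (Some c) (mp_lin I a x) <->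
  (exists2 i, i \in I & mp_le (Some c) (omap (fun t => a i + t) (x i))).
Proof.
rewrite /mp_lin big_geP; split.
  by move=> [i [_ H2 H3]]; exists i.
by move=> [i H2 H3]; exists i; split; rewrite ?mem_index_enum.
Qed.

End Aux.

Theorem lemma3p2 (R : realType) (n : nat) (I J I' J' : {set 'I_n})
  (a b : 'I_n -> R) :
  [disjoint I & J] -> [disjoint I' & J'] -> I != set0 ->
  ((forall x : 'I_n -> rmax R, mp_halfspace I' J' b x -> mp_halfspace I J a x)
   <->
   [/\ I \subset I', J' \subset J &
       forall i j, i \in I -> j \in J' -> b j - b i <= a j - a i]).
Proof.
move=> dIJ dIJ' /set0Pn [i0 i0I]; rewrite /mp_halfspace; split; last first.
  move=> [/subsetP sII /subsetP sJJ Hab] x Hx.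
  apply/lin_leP => i iI; case xi: (x i) => [t|] //=.
  have : mp_le (Some (b i + t)) (mp_lin J' b x).
    apply: mp_le_trans Hx; apply/lin_geP; exists i; first exact: sII.
    by rewrite xi /=.
  move=> /lin_geP [j jJ']; case xj: (x j) => [s|] //= Hle.
  apply/lin_geP; exists j; first exact: sJJ.
  rewrite xj /=; have := Hab i j iI jJ'; lra.
move=> H.
have sII : I \subset I'.
  apply/subsetP => i iI; apply/negPn/negP => iI'.
  pose x := fun k : 'I_n => if k == i then Some (0:R) else None.
  have Hx : mp_le (mp_lin I' b x) (mp_lin J' b x).
    apply/lin_leP => k kI'; rewrite /x; case: eqP => [Ek|] //.
    by rewrite -Ek kI' in iI'.
  have : mp_le (Some (a i + 0)) (mp_lin J a x).
    apply: mp_le_trans (H x Hx).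
    by apply/lin_geP; exists i => //; rewrite /x eqxx /= lexx.
  move=> /lin_geP [j jJ]; rewrite /x; case: eqP => [Ej|] //.
  by rewrite Ej (disjointFr dIJ iI) in jJ.
have key : forall i j, i \in I -> j \in J' ->
    j \in J /\ b j - b i <= a j - a i.
  move=> i j iI jJ'.
  have iI' : i \in I' by apply: (subsetP sII).
  have nij : j != i by apply/eqP => Eji; rewrite Eji (disjointFr dIJ' iI') in jJ'.
  pose x := fun k : 'I_n => if k == i then Some (0:R)
                            else if k == j then Some (b i - b j) else None.
  have Hx : mp_le (mp_lin I' b x) (mp_lin J' b x).
    apply/lin_leP => k kI'.
    have kj : k != j by apply/eqP => Ekj; rewrite Ekj (disjointFl dIJ' jJ') in kI'.
    apply: (@mp_le_trans _ _ (Some (b i + 0))).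
      by rewrite /x (negPf kj); case: eqP => [->|] //= _; rewrite lexx.
    apply/lin_geP; exists j => //; rewrite /x (negPf nij) eqxx /=; lra.
  have : mp_le (Some (a i + 0)) (mp_lin J a x).
    apply: mp_le_trans (H x Hx).
    by apply/lin_geP; exists i => //; rewrite /x eqxx /= lexx.
  move=> /lin_geP [k kJ]; rewrite /x; case: eqP => [Ek|_].
    by rewrite Ek (disjointFr dIJ iI) in kJ.
  case: eqP => [Ek|] //= Hle; move: Hle; rewrite -Ek => Hle; split => //; lra.
split => //.
  apply/subsetP => j jJ'; by case: (key i0 j i0I jJ').
by move=> i j iI jJ'; case: (key i j iI jJ').
Qed.
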